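(* Let $f(\cdot;\theta):\mathbb{R}^d\to\mathbb{R}$ be a model with parameters $\theta\in\mathbb{R}^p$, let $x_1,\dots,x_n\in\mathbb{R}^d$ be training inputs with labels $y_i$, and let $\theta^*$ be a global minimum of the empirical risk with zero loss, i.e. $f(x_i;\theta^* )=y_i$ for all $i\in[n]$, at which $f(x_i;\cdot)$ is differentiable for every $i$. Fix a learning rate $\eta>0$. If $\theta^*$ is linearly stable for SGD with learning rate $\eta$, then $$\operatorname{tr}(G(\theta^* ))\le \frac{2}{\eta}.$$
   Context: The empirical Fisher matrix is $G(\theta)=\frac1n\sum_{i=1}^n \nabla_\theta f(x_i;\theta)\nabla_\theta f(x_i;\theta)^T$. Linearized SGD (batch size 1) at $\theta^*$ is the random recursion $\delta_{t+1}=\delta_t-\eta\,\nabla_\theta f(x_{i_t};\theta^* )\nabla_\theta f(x_{i_t};\theta^* )^T\delta_t$, where $i_0,i_1,\dots$ are i.i.d. uniform on $[n]=\{1,\dots,n\}$ and independent of $\delta_0$. The global minimum $\theta^*$ is called linearly stable (for SGD with learning rate $\eta$) if for every distribution of the initial deviation $\delta_0\in\mathbb{R}^p$ (with finite second moment) and every $t\in\mathbb{N}$, the solution of this recursion satisfies $\|\mathbb{E}[\delta_t\delta_t^T]\|_F\le\|\mathbb{E}[\delta_0\delta_0^T]\|_F$. *)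

(* Defs.v *)
From HB Require Import structures.
From mathcomp Require Import all_boot all_order all_algebra.
From mathcomp Require Import all_classical all_reals all_analysis.
Set Implicit Arguments. Unset Strict Implicit. Unset Printing Implicit Defensive.
Import Order.TTheory GRing.Theory Num.Theory.
Import numFieldNormedType.Exports.
Local Open Scope ring_scope.

Definition grad {R : realType} {p : nat} (h : 'rV[R]_p -> R) (theta : 'rV[R]_p)
  : 'cV[R]_p := \col_j ('d h theta (delta_mx 0 j)).

Definition emp_fisher {R : realType} {n p : nat} (g : 'I_n -> 'cV[R]_p) : 'M[R]_p :=
  n%:R^-1 *: \sum_(i < n) (g i *m (g i)^T).

Definition frob {R : realType} {p : nat} (M : 'M[R]_p) : R :=
  Num.sqrt (\sum_(j < p) \sum_(k < p) M j k ^+ 2).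

Definition sgd_step {R : realType} {n p : nat} (eta : R) (g : 'I_n -> 'cV[R]_p)
  (v : 'cV[R]_p) (i : 'I_n) : 'cV[R]_p :=
  v - eta *: (g i *m (g i)^T *m v).

(* delta_t as a function of delta_0 and the realized indices i_0,...,i_{t-1}
   (i_0 applied first). *)
Definition sgd_traj {R : realType} {n p t : nat} (eta : R) (g : 'I_n -> 'cV[R]_p)
  (s : t.-tuple 'I_n) (v : 'cV[R]_p) : 'cV[R]_p :=
  foldl (sgd_step eta g) v s.

(* E[delta_t delta_t^T] where delta_0 = d0 is a random vector on the
   probability space (Omega, P) and i_0,...,i_{t-1} are i.i.d. uniform on
   'I_n and independent of delta_0: by independence the joint law is the
   product of the law of delta_0 and the uniform law on 'I_n^t, so the
   expectation is the P-expectation of the uniform average over index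
   tuples. *)
Definition second_moment_t {R : realType} {dO} {Omega : measurableType dO}
  (P : probability Omega R) {n p : nat} (eta : R) (g : 'I_n -> 'cV[R]_p)
  (d0 : Omega -> 'cV[R]_p) (t : nat) : 'M[R]_p :=
  \matrix_(j, k) fine ('E_P[ (fun w =>
      (n%:R ^+ t)^-1 * \sum_(s : t.-tuple 'I_n)
         (sgd_traj eta g s (d0 w) j 0 * sgd_traj eta g s (d0 w) k 0))%R ])%E.

Definition finite_second_moment {R : realType} {dO} {Omega : measurableType dO}
  (P : probability Omega R) {p : nat} (d0 : Omega -> 'cV[R]_p) : Prop :=
  (forall j, measurable_fun setT (fun w => d0 w j 0)) /\
  (forall j, P.-integrable setT (fun w => ((d0 w j 0) ^+ 2)%:E)).

(* Linear stability of theta_star for SGD with learning rate eta, where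
   g i = grad_theta f(x_i; theta_star): for every distribution of delta_0 with
   finite second moment (realized on an arbitrary probability space) and
   every t, ||E[delta_t delta_t^T]||_F <= ||E[delta_0 delta_0^T]||_F. *)
Definition linearly_stable {R : realType} {n p : nat} (eta : R)
  (g : 'I_n -> 'cV[R]_p) : Prop :=
  forall (dO : measure_display) (Omega : measurableType dO)
         (P : probability Omega R) (d0 : Omega -> 'cV[R]_p),
    finite_second_moment P d0 ->
    forall t : nat,
      frob (second_moment_t P eta g d0 t) <= frob (second_moment_t P eta g d0 0).

(* Main.v *)
Require Import Defs.
From HB Require Import structures.
From mathcomp Require Import all_boot all_order all_algebra.
From mathcomp Require Import all_classical all_reals all_analysis.
From mathcomp Require Import ring lra.
Import Order.TTheory GRing.Theory Num.Theory.
Import numFieldNormedType.Exports.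
Local Open Scope ring_scope.

Definition Bm {R : realType} {n p : nat} (eta : R) (g : 'I_n -> 'cV[R]_p) (i : 'I_n)
  : 'M[R]_p := 1%:M - eta *: (g i *m (g i)^T).
Definition Top {R : realType} {n p : nat} (eta : R) (g : 'I_n -> 'cV[R]_p) (X : 'M[R]_p)
  : 'M[R]_p := n%:R^-1 *: \sum_i (Bm eta g i *m X *m Bm eta g i).
Lemma Top_add {R : realType} {n p : nat} (eta : R) (g : 'I_n -> 'cV[R]_p) (X Y : 'M[R]_p) :
  Top eta g (X + Y) = Top eta g X + Top eta g Y.
Proof.
rewrite /Top -scalerDr -big_split /=; congr (_ *: _); apply: eq_bigr => i _.
by rewrite (mulmxDr (Bm eta g i) X Y) (mulmxDl _ _ (Bm eta g i)).
Qed.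
Lemma Top_scale {R : realType} {n p : nat} (eta : R) (g : 'I_n -> 'cV[R]_p) a (X : 'M[R]_p) :
  Top eta g (a *: X) = a *: Top eta g X.
Proof.
rewrite /Top (scalerA a) (mulrC a) -(scalerA _ a) (scaler_sumr a).
congr (_ *: _); apply: eq_bigr => i _.
by rewrite -(scalemxAr a (Bm eta g i) X) -scalemxAl.
Qed.
Definition ip {R : realType} {p : nat} (X Y : 'M[R]_p) : R := \tr (X^T *m Y).
Lemma Bm_tr {R : realType} {n p : nat} (eta : R) (g : 'I_n -> 'cV[R]_p) i :
  (Bm eta g i)^T = Bm eta g i.
Proof.
by rewrite /Bm linearB /= linearZ /= trmx_mul trmxK tr_scalar_mx.
Qed.
Lemma iterT_add {R : realType} {n p : nat} (eta : R) (g : 'I_n -> 'cV[R]_p) k (X Y : 'M[R]_p) :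
  iter k (Top eta g) (X + Y) = iter k (Top eta g) X + iter k (Top eta g) Y.
Proof. by elim: k => //= k ->; rewrite Top_add. Qed.
Lemma iterT_scale {R : realType} {n p : nat} (eta : R) (g : 'I_n -> 'cV[R]_p) k a (X : 'M[R]_p) :
  iter k (Top eta g) (a *: X) = a *: iter k (Top eta g) X.
Proof. by elim: k => //= k ->; rewrite Top_scale. Qed.
Lemma iterT0 {R : realType} {n p : nat} (eta : R) (g : 'I_n -> 'cV[R]_p) k :
  iter k (Top eta g) 0 = 0.
Proof. elim: k => //= k ->; rewrite /Top big1 ?scaler0 // => i _; by rewrite mulmx0 mul0mx. Qed.
Lemma iterT_sum {R : realType} {n p : nat} (eta : R) (g : 'I_n -> 'cV[R]_p) k
  (I : finType) (F : I -> 'M[R]_p) :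
  iter k (Top eta g) (\sum_i F i) = \sum_i iter k (Top eta g) (F i).
Proof.
exact: (big_morph _ (iterT_add eta g k) (iterT0 eta g k)).
Qed.
Lemma ipC {R : realType} {p : nat} (X Y : 'M[R]_p) : ip X Y = ip Y X.
Proof. by rewrite /ip -mxtrace_tr trmx_mul trmxK. Qed.
Lemma ipDr {R : realType} {p : nat} (X Y Z : 'M[R]_p) : ip X (Y + Z) = ip X Y + ip X Z.
Proof. by rewrite /ip mulmxDr mxtraceD. Qed.
Lemma ipZr {R : realType} {p : nat} a (X Y : 'M[R]_p) : ip X (a *: Y) = a * ip X Y.
Proof. by rewrite /ip -scalemxAr mxtraceZ. Qed.
Lemma ipDl {R : realType} {p : nat} (X Y Z : 'M[R]_p) : ip (Y + Z) X = ip Y X + ip Z X.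
Proof. by rewrite ipC ipDr !(ipC X). Qed.
Lemma ipZl {R : realType} {p : nat} a (X Y : 'M[R]_p) : ip (a *: Y) X = a * ip Y X.
Proof. by rewrite ipC ipZr ipC. Qed.
Lemma ip_sumr {R : realType} {p : nat} (X : 'M[R]_p) (I : finType) (F : I -> 'M[R]_p) :
  ip X (\sum_i F i) = \sum_i ip X (F i).
Proof. by rewrite /ip mulmx_sumr linear_sum. Qed.
Lemma ipE {R : realType} {p : nat} (X Y : 'M[R]_p) :
  ip X Y = \sum_j \sum_k X k j * Y k j.
Proof.
rewrite /ip /mxtrace; apply: eq_bigr => j _; rewrite mxE; apply: eq_bigr => k _.
by rewrite mxE.
Qed.
Lemma ip_ge0 {R : realType} {p : nat} (X : 'M[R]_p) : 0 <= ip X X.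
Proof.
rewrite ipE; apply: sumr_ge0 => j _; apply: sumr_ge0 => k _; by rewrite -expr2 sqr_ge0.
Qed.
Lemma Top_adj {R : realType} {n p : nat} (eta : R) (g : 'I_n -> 'cV[R]_p) (X Y : 'M[R]_p) :
  ip X (Top eta g Y) = ip (Top eta g X) Y.
Proof.
rewrite /Top ipZr ipZl ip_sumr ipC ip_sumr; congr (_ * _); apply: eq_bigr => i _.
rewrite ipC /ip !trmx_mul !Bm_tr.
by rewrite -!mulmxA [\tr (Bm _ _ _ *m _)]mxtrace_mulC !mulmxA.
Qed.
Lemma iterT_adj {R : realType} {n p : nat} (eta : R) (g : 'I_n -> 'cV[R]_p) k (X Y : 'M[R]_p) :
  ip X (iter k (Top eta g) Y) = ip (iter k (Top eta g) X) Y.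
Proof.
elim: k X Y => //= k IH X Y.
by rewrite Top_adj IH -iterSr /= -iterS.
Qed.
Lemma ip_quad {R : realType} {p : nat} (X Y : 'M[R]_p) l :
  ip (X + l *: Y) (X + l *: Y) = ip X X + 2 * l * ip X Y + l ^+ 2 * ip Y Y.
Proof. rewrite ipDl !ipDr !ipZl !ipZr (ipC Y X); ring. Qed.
Lemma ip_CS {R : realType} {p : nat} (X Y : 'M[R]_p) :
  ip X Y ^+ 2 <= ip X X * ip Y Y.
Proof.
have H l : 0 <= ip X X + 2 * l * ip X Y + l ^+ 2 * ip Y Y by rewrite -ip_quad ip_ge0.
have Ha := ip_ge0 Y; have Hc := ip_ge0 X.
set a := ip Y Y in H Ha *; set b := ip X Y in H *; set c := ip X X in H Hc *.
have [a0|apos] := eqVneq a 0.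
  rewrite a0 mulr0; have [b0|bn0] := eqVneq b 0; first by rewrite b0 expr0n.
  have := H (- (c + 1) / (2 * b)); rewrite a0 mulr0 addr0.
  have -> : 2 * (- (c + 1) / (2 * b)) * b = - (c + 1) by field; rewrite bn0.
  lra.
have ap : 0 < a by rewrite lt0r apos Ha.
have := H (- b / a).
have -> : c + 2 * (- b / a) * b + (- b / a) ^+ 2 * a = c - b ^+ 2 / a.
  by field; rewrite apos.
rewrite subr_ge0 ler_pdivrMr // mulrC => h; exact: h.
Qed.
Lemma growth {R : realType} (d : nat -> R) (K : R) :
  0 < d 0 -> (forall k, d k <= K) -> (forall k, d k.+1 ^+ 2 <= d k * d k.+2) ->
  d 1 <= d 0.
Proof.
move=> d0 hK hlc; rewrite leNgt; apply/negP => h1.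
set e := d 1 - d 0.
have ep : 0 < e by rewrite subr_gt0.
have inv : forall k, 0 < d k /\ e <= d k.+1 - d k.
  elim=> [|k [IH1 IH2]]; first by split => //; rewrite /e.
  have hk := hlc k.
  have dk1 : 0 < d k.+1 by lra.
  split => //.
  have h : 0 <= d k * (d k.+2 - d k.+1 - e) by nra.
  rewrite pmulr_rge0 // in h; lra.
have lin : forall k, d 0 + k%:R * e <= d k.
  elim=> [|k IH]; first by rewrite mul0r addr0.
  have [_ h] := inv k; rewrite mulrS mulrDl mul1r; lra.
have K0 : 0 <= K / e by apply: divr_ge0; [have := hK 0; lra | lra].
have := archi_boundP K0; set N := Num.bound _ => hN.
have := lin N; have := hK N.
rewrite ltr_pdivrMr // in hN; lra.
Qed.
Lemma sum_tuple_cons {V : nmodType} {n t : nat} (F : t.+1.-tuple 'I_n -> V) :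
  \sum_(s : t.+1.-tuple 'I_n) F s =
  \sum_(i < n) \sum_(s : t.-tuple 'I_n) F [tuple of i :: s].
Proof.
rewrite pair_big /=.
rewrite (reindex (fun q : 'I_n * t.-tuple 'I_n => [tuple of q.1 :: q.2])) //=.
apply: onW_bij; exists (fun s : t.+1.-tuple 'I_n => (thead s, [tuple of behead s])).
  by case=> i s /=; rewrite theadE; congr pair => //; exact: val_inj.
by move=> s; case/tupleP: s => x s; apply: val_inj; rewrite /= theadE.
Qed.
Definition Mt {R : realType} {n p : nat} (eta : R) (g : 'I_n -> 'cV[R]_p) t (v : 'cV[R]_p)
  : 'M[R]_p :=
  (n%:R ^+ t)^-1 *: \sum_(s : t.-tuple 'I_n)
     (sgd_traj eta g s v *m (sgd_traj eta g s v)^T).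
Lemma sgd_stepE {R : realType} {n p : nat} (eta : R) (g : 'I_n -> 'cV[R]_p) v i :
  sgd_step eta g v i = Bm eta g i *m v.
Proof. rewrite /sgd_step /Bm (mulmxBl (1%:M) (eta *: (g i *m (g i)^T)) v).
by rewrite mul1mx -scalemxAl.
Qed.
Lemma Mt_S {R : realType} {n p : nat} (eta : R) (g : 'I_n -> 'cV[R]_p) t v :
  Mt eta g t.+1 v = n%:R^-1 *: \sum_i Mt eta g t (Bm eta g i *m v).
Proof.
rewrite /Mt sum_tuple_cons exprS invfM -scalerA scaler_sumr; congr (_ *: _).
apply: eq_bigr => i _; congr (_ *: _); apply: eq_bigr => s _.
by rewrite /sgd_traj /= sgd_stepE.
Qed.
Lemma Mt_eq {R : realType} {n p : nat} (eta : R) (g : 'I_n -> 'cV[R]_p) t v :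
  Mt eta g t v = iter t (Top eta g) (v *m v^T).
Proof.
elim: t v => [|t IH] v.
  rewrite /Mt expr0 invr1 scale1r /=.
  rewrite (eq_bigl (pred1 [tuple])) ?big_pred1_eq // => s.
  by apply/esym/eqP/val_inj; case: s => -[].
rewrite Mt_S iterSr; under eq_bigr => i _ do rewrite IH.
rewrite -iterT_sum -iterT_scale; congr iter.
rewrite /Top; congr (_ *: _); apply: eq_bigr => i _.
by rewrite trmx_mul Bm_tr !mulmxA.
Qed.
Lemma sm_const {R : realType} {n p : nat} (eta : R) (g : 'I_n -> 'cV[R]_p)
  (dO : measure_display) (Omega : measurableType dO) (P : probability Omega R) t v :
  second_moment_t P eta g (fun _ => v) t = Mt eta g t v.
Proof.
apply/matrixP => j k; rewrite !mxE expectation_cst /= summxE; congr (_ * _).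
apply: eq_bigr => s _; rewrite !mxE big_ord1 !mxE //.
Qed.
Lemma fsm_const {R : realType} {p : nat}
  (dO : measure_display) (Omega : measurableType dO) (P : probability Omega R) (v : 'cV[R]_p) :
  finite_second_moment P (fun _ => v).
Proof.
split => j; first exact: measurable_cst.
exact: (finite_measure_integrable_cst P (v j 0 ^+ 2) measurableT).
Qed.
Lemma tr_le_frob {R : realType} {p : nat} (Y : 'M[R]_p) : \tr Y <= p%:R * frob Y.
Proof.
have h j : Y j j <= frob Y.
  have H1 : Y j j ^+ 2 <= \sum_k Y j k ^+ 2.
    by rewrite (bigD1 j) //= lerDl sumr_ge0 // => k _; exact: sqr_ge0.
  have H2 : \sum_k Y j k ^+ 2 <= \sum_a \sum_k Y a k ^+ 2.
    rewrite [leRHS](bigD1 j) //= lerDl sumr_ge0 // => a _.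
    by apply: sumr_ge0 => k _; exact: sqr_ge0.
  apply: le_trans (ler_norm _) _; rewrite -sqrtr_sqr /frob.
  by apply: ler_wsqrtr; apply: le_trans H2.
rewrite /mxtrace; apply: le_trans (ler_sum _ (fun j _ => h j)) _.
by rewrite sumr_const card_ord mulr_natl.
Qed.
Lemma jensen {R : realType} {n : nat} (hn : (0 < n)%N) (a : 'I_n -> R) :
  (\sum_i a i) ^+ 2 <= n%:R * \sum_i a i ^+ 2.
Proof.
set S1 := \sum_i a i; set S2 := \sum_i a i ^+ 2; set m := S1 / n%:R.
have h : 0 <= \sum_i (a i - m) ^+ 2 by apply: sumr_ge0 => i _; exact: sqr_ge0.
have E : \sum_i (a i - m) ^+ 2 = S2 + (- (2 * m)) * S1 + n%:R * m ^+ 2.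
  have E0 : \sum_i (a i - m) ^+ 2 = \sum_i ((a i ^+ 2 + (- (2 * m)) * a i) + m ^+ 2).
    by apply: eq_bigr => i _; ring.
  rewrite E0.
  by rewrite big_split /= big_split /= -mulr_sumr sumr_const card_ord -[m ^+ 2 *+ n]mulr_natl.
have n0 : (0 : R) < n%:R by rewrite ltr0n.
have E2 : n%:R * (S2 + (- (2 * m)) * S1 + n%:R * m ^+ 2) = n%:R * S2 - S1 ^+ 2.
  by rewrite /m; field; rewrite gt_eqF.
rewrite E in h; have := mulr_ge0 (ltW n0) h; rewrite E2; lra.
Qed.
Lemma trA2 {R : realType} {p : nat} (g : 'cV[R]_p) :
  \tr ((g *m g^T) *m (g *m g^T)) = (\tr (g *m g^T)) ^+ 2.
Proof.
have e : \tr (g *m g^T) = (g^T *m g) 0 0 by rewrite mxtrace_mulC /mxtrace big_ord1.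
rewrite e mulmxA -(mulmxA g) [g^T *m g]mx11_scalar mul_mx_scalar -scalemxAl.
by rewrite mxtraceZ e [_%:M 0 0]mxE eqxx mulr1n expr2.
Qed.
Lemma tr_T1 {R : realType} {n p : nat} (eta : R) (g : 'I_n -> 'cV[R]_p) :
  \tr (Top eta g 1%:M) = n%:R^-1 * \sum_i (p%:R - 2 * eta * \tr (g i *m (g i)^T)
     + eta ^+ 2 * \tr (g i *m (g i)^T) ^+ 2).
Proof.
rewrite /Top mxtraceZ linear_sum /=; congr (_ * _); apply: eq_bigr => i _.
rewrite mulmx1 /Bm.
set A := g i *m (g i)^T.
rewrite (mulmxBl 1%:M (eta *: A) (1%:M - eta *: A)) mul1mx.
rewrite (mulmxBr (eta *: A) 1%:M (eta *: A)) mulmx1 -scalemxAl -scalemxAr scalerA.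
rewrite !linearB /= !linearZ /= mxtrace1 trA2.
have sE (a b : R) : a *: b = a * b by [].
rewrite !sE /A; ring.
Qed.
Theorem proposition3p2 (R : realType) (d p n : nat) (hn : (0 < n)%N)
  (f : 'rV[R]_d -> 'rV[R]_p -> R) (x : 'I_n -> 'rV[R]_d) (y : 'I_n -> R)
  (theta : 'rV[R]_p)
  (hfit : forall i, f (x i) theta = y i)
  (hdiff : forall i, differentiable (f (x i)) theta)
  (eta : R) (heta : 0 < eta)
  (hstab : linearly_stable eta (fun i => grad (f (x i)) theta)) :
  \tr (emp_fisher (fun i => grad (f (x i)) theta)) <= 2 / eta.
Proof.
set g := fun i => grad (f (x i)) theta.
set T := Top eta g.
have stab j m : frob (iter m T (delta_mx j j)) <= frob (delta_mx j j : 'M[R]_p).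
  have := hstab _ _ (\d_(0:R) : probability R R) (fun _ => delta_mx j 0) (fsm_const _ _ _ _) m.
  by rewrite !sm_const !Mt_eq /= trmx_delta mul_delta_mx.
set K := \sum_(j < p) p%:R * frob (delta_mx j j : 'M[R]_p).
have trb m : \tr (iter m T 1%:M) <= K.
  rewrite mx1_sum_delta iterT_sum linear_sum /=; apply: ler_sum => j _.
  apply: le_trans (tr_le_frob _) _; apply: ler_wpM2l => //; exact: stab.
pose dd := fun k => ip (iter k T 1%:M) (iter k T 1%:M).
have ip1 Y : ip 1%:M Y = \tr Y by rewrite /ip tr_scalar_mx mul1mx.
have dE k : dd k = \tr (iter (k + k) T 1%:M) by rewrite /dd -iterT_adj -iterD ip1.
have dlc k : dd k.+1 ^+ 2 <= dd k * dd k.+2.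
  have -> : dd k.+1 = ip (iter k T 1%:M) (iter k.+2 T 1%:M) by rewrite /dd /= -Top_adj.
  exact: ip_CS.
have d0 : dd 0 = p%:R by rewrite /dd /= ip1 mxtrace1.
have [p0|pp] := posnP p.
  rewrite /mxtrace big1 ?divr_ge0 ?ltW //; case=> k hk; exfalso; move: hk; by rewrite p0.
have dle : dd 1 <= dd 0.
  apply: (growth dd K); [by rewrite d0 ltr0n | move=> k; rewrite dE; exact: trb | exact: dlc].
have c1 : \tr (T 1%:M) <= p%:R.
  have := ip_CS 1%:M (T 1%:M); rewrite !ip1 mxtrace1.
  have -> : ip (T 1%:M) (T 1%:M) = dd 1 by [].
  rewrite d0 in dle; have p0' : (0:R) <= p%:R by [].
  move=> h; nra.
rewrite /T tr_T1 in c1.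
rewrite /emp_fisher mxtraceZ linear_sum /=.
set a := fun i => \tr (g i *m (g i)^T).
rewrite -/(a _) in c1 *.
set S1 := \sum_i a i; set S2 := \sum_i a i ^+ 2.
have ES : \sum_i (p%:R - 2 * eta * a i + eta ^+ 2 * a i ^+ 2) =
    n%:R * p%:R + (- (2 * eta)) * S1 + eta ^+ 2 * S2.
  have E0 : \sum_i (p%:R - 2 * eta * a i + eta ^+ 2 * a i ^+ 2) =
      \sum_i ((p%:R + (- (2 * eta)) * a i) + eta ^+ 2 * a i ^+ 2).
    by apply: eq_bigr => i _; ring.
  rewrite E0 big_split /= big_split /= -!mulr_sumr sumr_const card_ord.
  by rewrite -[p%:R *+ n]mulr_natl.
rewrite ES in c1.
have n0 : (0 : R) < n%:R by rewrite ltr0n.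
have hA : eta ^+ 2 * S2 <= 2 * eta * S1.
  have := c1; rewrite mulrC ler_pdivrMr // => h; nra.
have hJ : S1 ^+ 2 <= n%:R * S2 := jensen hn a.
have S2p : 0 <= S2 by apply: sumr_ge0 => i _; exact: sqr_ge0.
have hA' : eta * S2 <= 2 * S1.
  have : eta * (eta * S2) <= eta * (2 * S1) by rewrite mulrA -expr2 mulrA (mulrC eta 2).
  by rewrite ler_pM2l.
have key : eta * S1 <= 2 * n%:R.
  have [S1n|S1p] := lerP S1 0; first by nra.
  have : S1 * (eta * S1) <= S1 * (2 * n%:R) by nra.
  by rewrite ler_pM2l.
rewrite -subr_ge0.
have -> : 2 / eta - n%:R^-1 * S1 = (2 * n%:R - eta * S1) / (eta * n%:R).
  by field; rewrite !gt_eqF.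
apply: divr_ge0; first by rewrite subr_ge0.
by apply: mulr_ge0; apply: ltW.
Qed.
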